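(* Let $S_\omega$ be a standard graded skew polynomial algebra in $n$ variables at cube roots of unity. Then a subset $F\subset[n]$ is a face of $\Delta_\omega$ if and only if $F$ is an independent set of $I_v(M_\omega)$ for some $v\in[n]$. In particular, $\dim\Delta_\omega=\max\{\alpha(I_v(M_\omega))\mid v\in[n]\}-1$.
   Context: Let $k$ be an algebraically closed field of characteristic $0$; fix a primitive cube root of unity $\zeta_3$. For $\omega=(\omega_{ij})$ with $\omega_{ii}=1$, $\omega_{ij}\omega_{ji}=1$, all cube roots of unity, $S_\omega=k\langle x_1,\dots,x_n\rangle/(x_ix_j-\omega_{ij}x_jx_i)$ with $\deg x_i=1$; its E-matrix is $M_\omega=(m_{ij})$ over $\mathbb{Z}/3\mathbb{Z}$ with $\omega_{ij}=\zeta_3^{m_{ij}}$ (viewed as a digraph on $[n]$ with an edge $i\to j$ iff $m_{ij}=1$). The point simplicial complex $\Delta_\omega$ has vertex set $[n]$ and faces the $F\subset[n]$ with $\omega_{ij}\omega_{jh}\omega_{hi}=1$ for all distinct $i,j,h\in F$; $\dim\Delta=\max\{|F|-1\mid F\in\Delta\}$. For $v\in[n]$ let $X_v$ be the matrix with $(X_v)_{iv}=1$, $(X_v)_{vi}=-1$ for $i\ne v$ and other entries $0$. The isolation $I_v(M)$ of a skew-symmetric $M$ over $\mathbb{Z}/3\mathbb{Z}$ at $v$ is the unique matrix of the form $M+\sum_{u=1}^n a_uX_u$ ($a_u\in\mathbb{Z}/3\mathbb{Z}$) whose $v$-th row and column are zero. A set $T\subset[n]$ is independent in a skew-symmetric $N=(n_{ij})$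 if $n_{ij}=0$ for all distinct $i,j\in T$, and the independence number $\alpha(N)$ is the maximum size of an independent set. *)

(* Defs.v *)
From HB Require Import structures.
From mathcomp Require Import all_boot all_order all_algebra all_field.
Set Implicit Arguments. Unset Strict Implicit. Unset Printing Implicit Defensive.
Import Order.TTheory GRing.Theory Num.Theory.
Local Open Scope ring_scope.

(* omega : an n x n matrix over k of "skew" parameters omega_ij *)
Definition cube_root_param (k : fieldType) (n : nat) (w : 'M[k]_n) : Prop :=
  (forall i, w i i = 1) /\
  (forall i j, w i j * w j i = 1) /\
  (forall i j, w i j ^+ 3 = 1).

Definition is_Ematrix (k : fieldType) (n : nat) (zeta : k) (w : 'M[k]_n)
    (M : 'M['Z_3]_n) : Prop :=
  forall i j, w i j = zeta ^+ (nat_of_ord (M i j)).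

Definition is_face (k : fieldType) (n : nat) (w : 'M[k]_n) (F : {set 'I_n}) : Prop :=
  forall i j h, i \in F -> j \in F -> h \in F ->
    i != j -> j != h -> i != h -> w i j * w j h * w h i = 1.

Definition is_faceb (k : fieldType) (n : nat) (w : 'M[k]_n) (F : {set 'I_n}) : bool :=
  [forall i, forall j, forall h,
    [&& i \in F, j \in F, h \in F, i != j, j != h & i != h] ==>
    (w i j * w j h * w h i == 1)].

Definition dimDelta (k : fieldType) (n : nat) (w : 'M[k]_n) : int :=
  (\max_(F : {set 'I_n} | is_faceb w F) #|F|)%:Z - 1.

Definition Xmat (n : nat) (v : 'I_n) : 'M['Z_3]_n :=
  \matrix_(i, j) (if (j == v) && (i != v) then 1
                  else if (i == v) && (j != v) then -1 else 0).

Definition is_isolationb (n : nat) (M : 'M['Z_3]_n) (v : 'I_n) (N : 'M['Z_3]_n) : bool :=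
  [exists a : {ffun 'I_n -> 'Z_3}, N == M + \sum_(u < n) a u *: Xmat u] &&
  [forall i, (N v i == 0) && (N i v == 0)].

(* I_v(M): the (unique) isolation of M at v *)
Definition isolation (n : nat) (M : 'M['Z_3]_n) (v : 'I_n) : 'M['Z_3]_n :=
  odflt 0 [pick N | is_isolationb M v N].

Definition independent (n : nat) (N : 'M['Z_3]_n) (T : {set 'I_n}) : Prop :=
  forall i j, i \in T -> j \in T -> i != j -> N i j = 0.

Definition independentb (n : nat) (N : 'M['Z_3]_n) (T : {set 'I_n}) : bool :=
  [forall i, forall j, [&& i \in T, j \in T & i != j] ==> (N i j == 0)].

Definition alpha (n : nat) (N : 'M['Z_3]_n) : nat :=
  \max_(T : {set 'I_n} | independentb N T) #|T|.

(* Main.v *)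
Require Import Defs.
From HB Require Import structures.
From mathcomp Require Import all_boot all_order all_algebra all_field.
From mathcomp Require Import ring.
Set Implicit Arguments. Unset Strict Implicit.
Import Order.TTheory GRing.Theory Num.Theory.
Local Open Scope ring_scope.

Lemma valZ3D (x y : 'Z_3) : nat_of_ord (x + y) = ((nat_of_ord x + nat_of_ord y) %% 3)%N.
Proof. by []. Qed.

Lemma zexpD (k : fieldType) (zeta : k) (x y : 'Z_3) :
  3.-primitive_root zeta -> zeta ^+ (nat_of_ord (x + y : 'Z_3)) = zeta ^+ x * zeta ^+ y.
Proof. by move=> pz; rewrite valZ3D (prim_expr_mod pz) exprD. Qed.

Lemma zexp1 (k : fieldType) (zeta : k) (x : 'Z_3) :
  3.-primitive_root zeta -> (zeta ^+ x == 1) = (x == 0).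
Proof.
move=> pz; rewrite -(expr0 zeta) (eq_prim_root_expr pz) modn_small // mod0n.
Qed.

Lemma sumX (n : nat) (a : {ffun 'I_n -> 'Z_3}) i j :
  (\sum_(u < n) a u *: Xmat u) i j = if i == j then 0 else a j - a i.
Proof.
rewrite summxE.
under eq_bigr => u _ do rewrite mxE mxE.
case: eqP => [<-|/eqP ij].
  by apply: big1 => u _; case: (i == u); rewrite /= ?andbF ?mulr0.
rewrite (bigD1 j) //= eqxx ij /= mulr1.
rewrite (bigD1 i) //=.
rewrite eqxx (eq_sym j i) (negbTE ij) /= big1; last first.
  move=> u /andP[ui uj]; rewrite (eq_sym j u) (negbTE ui) (eq_sym i u) (negbTE uj) /= mulr0 //.
by rewrite mulrN1 addr0.
Qed.

Definition N0 (n : nat) (M : 'M['Z_3]_n) (v : 'I_n) : 'M['Z_3]_n :=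
  \matrix_(i, j) (M i j + M j v + M v i).

Lemma isoE (n : nat) (M : 'M['Z_3]_n) (v : 'I_n) :
  (forall i j, M j i = - M i j) -> (forall i, M i i = 0) ->
  isolation M v = N0 M v.
Proof.
move=> sk d.
have H : is_isolationb M v (N0 M v).
  apply/andP; split.
    apply/existsP; exists [ffun u => - M v u]; apply/eqP/matrixP => i j.
    rewrite !mxE sumX !ffunE; case: eqP => [<-|_].
      by rewrite d (sk v i); ring.
    by rewrite (sk v j); ring.
  apply/forallP => i; rewrite !mxE d (sk v i); apply/andP; split; apply/eqP; ring.
rewrite /isolation; case: pickP => [N /andP[/existsP[a /eqP ->] /forallP row] | /(_ (N0 M v))].
  have ai : forall i, a i = a v - M v i.
    move=> i; case: (eqVneq v i) => [<-|vi]; first by rewrite d subr0.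
    move: (row i) => /andP[/eqP + _]; rewrite !mxE sumX (negbTE vi) => e.
    by rewrite -(subr0 (a i)) -e; ring.
  apply/matrixP => i j; rewrite !mxE sumX; case: eqP => [<-|_].
    by rewrite d (sk v i); ring.
  by rewrite (ai i) (ai j) (sk v j); ring.
by rewrite H.
Qed.

Lemma facebP (k : fieldType) (n : nat) (w : 'M[k]_n) (F : {set 'I_n}) :
  is_faceb w F <-> is_face w F.
Proof.
split.
  move=> /forallP H i j h iF jF hF ij jh ih.
  move: (H i) => /forallP /(_ j) /forallP /(_ h) /implyP.
  by rewrite iF jF hF ij jh ih => /(_ isT) /eqP.
move=> fF; apply/forallP => i; apply/forallP => j; apply/forallP => h.
by apply/implyP => /andP[iF /andP[jF /andP[hF /and3P[ij jh ih]]]]; apply/eqP; apply: fF.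
Qed.

Lemma indbP (n : nat) (N : 'M['Z_3]_n) (T : {set 'I_n}) :
  independentb N T <-> independent N T.
Proof.
split.
  move=> /forallP H i j iF jF ij.
  move: (H i) => /forallP /(_ j) /implyP.
  by rewrite iF jF ij => /(_ isT) /eqP.
move=> fF; apply/forallP => i; apply/forallP => j.
by apply/implyP => /and3P[iF jF ij]; apply/eqP; apply: fF.
Qed.

Theorem proposition5p5 (k : closedFieldType) (n : nat) (zeta : k)
  (w : 'M[k]_n) (M : 'M['Z_3]_n) :
  [pchar k] =i pred0 ->
  3.-primitive_root zeta ->
  (0 < n)%N ->
  cube_root_param w ->
  is_Ematrix zeta w M ->
  (forall F : {set 'I_n}, is_face w F <-> exists v : 'I_n, independent (isolation M v) F) /\
  dimDelta w = (\max_(v < n) alpha (isolation M v))%:Z - 1.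
Proof.
move=> _ pz n0 [w1 [w2 w3]] E.
have d : forall i, M i i = 0.
  by move=> i; apply/eqP; rewrite -(zexp1 (M i i) pz) -E w1.
have sk : forall i j, M j i = - M i j.
  move=> i j; apply/eqP; rewrite -addr_eq0 -(zexp1 _ pz) (zexpD _ _ pz) -!E.
  by rewrite mulrC w2.
have tri : forall i j h, w i j * w j h * w h i = 1 <-> M i j + M j h + M h i = 0.
  move=> i j h; rewrite !E -!(zexpD _ _ pz); split => [/eqP|->].
    by rewrite zexp1 // => /eqP.
  by rewrite expr0.
have P1 : forall F : {set 'I_n}, is_face w F <-> exists v : 'I_n, independent (isolation M v) F.
  move=> F; split.
    move=> fF; case: (set_0Vmem F) => [->|[v vF]].
      by exists (Ordinal n0) => i j; rewrite in_set0.
    exists v; rewrite isoE // => i j iF jF ij; rewrite mxE.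
    case: (eqVneq i v) => [->|iv]; first by rewrite d (sk j v); ring.
    case: (eqVneq j v) => [->|jv]; first by rewrite d (sk i v); ring.
    by apply/tri; apply: fF.
  move=> [v]; rewrite isoE // => ind i j h iF jF hF ij jh ih; apply/tri.
  have:= ind i j iF jF ij; have:= ind j h jF hF jh.
  have:= ind h i hF iF (ltac:(by rewrite eq_sym)); rewrite !mxE => e1 e2 e3.
  have <- : (M i j + M j v + M v i) + (M j h + M h v + M v j) + (M h i + M i v + M v h)
     = M i j + M j h + M h i by rewrite (sk v i) (sk v j) (sk v h); ring.
  by rewrite e1 e2 e3 !addr0.
split => //.
rewrite /dimDelta; congr (_%:Z - 1); apply/eqP; rewrite eqn_leq; apply/andP; split.
  apply/bigmax_leqP => F /facebP /P1 [v indv].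
  apply: leq_trans (leq_bigmax v); rewrite /alpha.
  by apply: leq_bigmax_cond; apply/indbP.
apply/bigmax_leqP => v _; apply/bigmax_leqP => T /indbP indT.
by apply: leq_bigmax_cond; apply/facebP; apply/P1; exists v.
Qed.
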